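(* Let $\alpha,\beta,\gamma>0$ with $\gamma^2-\alpha\beta>0$ and $n\ge2$. Then the pushforward $\mathrm{SH}_\#P_n$ of the signed Boltzmann measure $P_n$ on generalised snake configurations equals the Boltzmann measure $\mathbb{P}_n$ on six-vertex configurations on $\mathbb{T}_n$ with weights $$a_1=1,\quad a_2=\gamma^2-\alpha\beta,\quad b_1=\beta,\quad b_2=\alpha,\quad c_1=c_2=\gamma,$$ which satisfy $\triangle=\frac{a_1a_2+b_1b_2-c_1c_2}{2\sqrt{a_1a_2b_1b_2}}=0$. More precisely, for each pure snake configuration $\rho$, $\sum_{\bar\rho\in\mathrm{sh}^{-1}(\rho)}\bar w(\bar\rho)=w(\Phi^{-1}(\rho))$. Moreover, every Boltzmann measure on six-vertex configurations on $\mathbb{T}_n$ with positive weights satisfying $\triangle=0$ arises in this way for some such $\alpha,\beta,\gamma$.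
   Context: Six-vertex model on $\mathbb{T}_n=(\mathbb{Z}/n\mathbb{Z})^2$: orientations of edges with two in and two out at each vertex; vertex types (weights in brackets): type 1 ($a_1$): horizontal edges point right, vertical up; type 2 ($a_2$): horizontal left, vertical down; type 3 ($b_1$): horizontal right, vertical down; type 4 ($b_2$): horizontal left, vertical up; type 5 ($c_1$): horizontal edges into the vertex, vertical out; type 6 ($c_2$): horizontal out, vertical in. $w(\sigma)=\prod_v(\text{weight of type at }v)$, $\mathbb{P}_n(\sigma)=w(\sigma)/Z_n$. Snakes. $e^1=(1,0)$, $e^2=(0,1)$, $e^3=\frac12(e^1+e^2)$. Mid-edges $\mathbb{M}_n=\mathbb{M}_n^B\sqcup\mathbb{M}_n^W$, $\mathbb{M}_n^B=\{v+\frac12e^1:v\in\mathbb{T}_n\}$ (black), $\mathbb{M}_n^W=\{v+\frac12e^2:v\in\mathbb{T}_n\}$ (white), coordinates mod $n$. A generalised snake configuration is a permutation $\bar\rho$ of $\mathbb{M}_n$ with $\bar\rho(x)\in\{x,x+e^3,x+e^1\}$ for $x$ black and $\bar\rho(x)\in\{x,x+e^3,x+e^2\}$ for $x$ white; $\mathcal{GS}_n$ is the set of these. A crossing of $\bar\rho$ is a vertex $v$ with $\bar\rho(v-\frac12e^1)=v+\frac12e^1$ and $\bar\rho(v-\frac12e^2)=v+\frac12e^2$; $S(\bar\rho)$ is the number of crossings. Pure snake configurations ($\mathcal S_n$) are those with no crossings. $A(\bar\rho)=\#\{x:\bar\rho(x)=x+e^1\}$, $B(\bar\rho)=\#\{x:\bar\rho(x)=x+e^2\}$,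 $C(\bar\rho)=\#\{x:\bar\rho(x)=x+e^3\}$. Weight $\bar w(\bar\rho)=(-1)^{S(\bar\rho)}\alpha^{A(\bar\rho)}\beta^{B(\bar\rho)}\gamma^{C(\bar\rho)}$, $Z_n^{\mathcal{GS}}=\sum_{\bar\rho\in\mathcal{GS}_n}\bar w(\bar\rho)$, $P_n(\bar\rho)=\bar w(\bar\rho)/Z_n^{\mathcal{GS}}$ (a signed measure of total mass 1). The shape map $\mathrm{sh}:\mathcal{GS}_n\to\mathcal S_n$ replaces, at every crossing $v$, the values by $\rho(v-\frac12e^1)=v+\frac12e^2$, $\rho(v-\frac12e^2)=v+\frac12e^1$, leaving all else unchanged. The bijection $\Phi$ from six-vertex configurations to $\mathcal S_n$ is defined vertex by vertex: at $v$, with $W_v=v-\frac12e^1,S_v=v-\frac12e^2,E_v=v+\frac12e^1,N_v=v+\frac12e^2$: type 1: $\rho(W_v)=W_v,\rho(S_v)=S_v$; type 2: $\rho(W_v)=N_v,\rho(S_v)=E_v$; type 3: $\rho(W_v)=W_v,\rho(S_v)=N_v$; type 4: $\rho(W_v)=E_v,\rho(S_v)=S_v$; type 5: $\rho(W_v)=W_v,\rho(S_v)=E_v$; type 6: $\rho(W_v)=N_v,\rho(S_v)=S_v$. $\mathrm{SH}=\Phi^{-1}\circ\mathrm{sh}$, and for a signed measure $P$ on a finite set and surjection $\phi$, $(\phi_\#P)(e')=\sum_{e\in\phi^{-1}(e')}P(e)$. *)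

(* Defs.v *)
From HB Require Import structures.
From mathcomp Require Import all_boot all_order all_algebra.
Set Implicit Arguments. Unset Strict Implicit. Unset Printing Implicit Defensive.
Import Order.TTheory GRing.Theory Num.Theory.
Local Open Scope ring_scope.

Definition vert (n : nat) : finType := ('Z_n * 'Z_n)%type.
(* Mid-edges: (true, v) = v + e1/2 (black), (false, v) = v + e2/2 (white). *)
Definition mid (n : nat) : finType := (bool * vert n)%type.

Section Defs.
Variable n : nat.

Definition ve1 (v : vert n) : vert n := (v.1 + 1, v.2).
Definition ve2 (v : vert n) : vert n := (v.1, v.2 + 1).
Definition vm1 (v : vert n) : vert n := (v.1 - 1, v.2).
Definition vm2 (v : vert n) : vert n := (v.1, v.2 - 1).

(* translations of mid-edges by e1, e2, e3 = (e1+e2)/2 *)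
Definition plus_e1 (x : mid n) : mid n := (x.1, ve1 x.2).
Definition plus_e2 (x : mid n) : mid n := (x.1, ve2 x.2).
Definition plus_e3 (x : mid n) : mid n :=
  if x.1 then (false, ve1 x.2) else (true, ve2 x.2).

Definition Wm (v : vert n) : mid n := (true, vm1 v).
Definition Sm (v : vert n) : mid n := (false, vm2 v).
Definition Em (v : vert n) : mid n := (true, v).
Definition Nm (v : vert n) : mid n := (false, v).

Definition is_gsnake (f : {ffun mid n -> mid n}) : bool :=
  injectiveb f &&
  [forall x, [|| f x == x, f x == plus_e3 x |
               f x == (if x.1 then plus_e1 x else plus_e2 x)]].

Definition GS : {set {ffun mid n -> mid n}} := [set f | is_gsnake f].

Definition crossing (f : {ffun mid n -> mid n}) (v : vert n) : bool :=
  (f (Wm v) == Em v) && (f (Sm v) == Nm v).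

Definition Scount (f : {ffun mid n -> mid n}) : nat := #|[set v | crossing f v]|.
Definition Acount (f : {ffun mid n -> mid n}) : nat := #|[set x | f x == plus_e1 x]|.
Definition Bcount (f : {ffun mid n -> mid n}) : nat := #|[set x | f x == plus_e2 x]|.
Definition Ccount (f : {ffun mid n -> mid n}) : nat := #|[set x | f x == plus_e3 x]|.

Definition PS : {set {ffun mid n -> mid n}} :=
  [set f | is_gsnake f && [forall v, ~~ crossing f v]].

Definition wbar {R : nzRingType} (alpha beta gamma : R) (f : {ffun mid n -> mid n}) : R :=
  (-1) ^+ Scount f * alpha ^+ Acount f * beta ^+ Bcount f * gamma ^+ Ccount f.

Definition ZGS {R : nzRingType} (alpha beta gamma : R) : R :=
  \sum_(f in GS) wbar alpha beta gamma f.

Definition PGS {R : fieldType} (alpha beta gamma : R) (f : {ffun mid n -> mid n}) : R :=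
  wbar alpha beta gamma f / ZGS alpha beta gamma.

Definition sh (f : {ffun mid n -> mid n}) : {ffun mid n -> mid n} :=
  [ffun x => if x.1 then (if crossing f (ve1 x.2) then Nm (ve1 x.2) else f x)
             else (if crossing f (ve2 x.2) then Em (ve2 x.2) else f x)].

Inductive vtype := T1 | T2 | T3 | T4 | T5 | T6.

(* orientation: sigma (true, v) = true iff the horizontal edge v -- v+e1 points
   right; sigma (false, v) = true iff the vertical edge v -- v+e2 points up *)
Definition vtype_at (s : {ffun mid n -> bool}) (v : vert n) : option vtype :=
  match s (Wm v), s (Em v), s (Sm v), s (Nm v) with
  | true,  true,  true,  true  => Some T1
  | false, false, false, false => Some T2
  | true,  true,  false, false => Some T3
  | false, false, true,  true  => Some T4
  | true,  false, false, true  => Some T5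
  | false, true,  true,  false => Some T6
  | _, _, _, _ => None
  end.

Definition SV : {set {ffun mid n -> bool}} :=
  [set s | [forall v, if vtype_at s v is Some _ then true else false]].

Definition sv_weight {R : nzRingType} (wt : vtype -> R) (s : {ffun mid n -> bool}) : R :=
  \prod_(v : vert n) (match vtype_at s v with Some t => wt t | None => 0 end).

Definition Zsv {R : nzRingType} (wt : vtype -> R) : R :=
  \sum_(s in SV) sv_weight wt s.

Definition Psv {R : fieldType} (wt : vtype -> R) (s : {ffun mid n -> bool}) : R :=
  sv_weight wt s / Zsv wt.

Definition Phi (s : {ffun mid n -> bool}) : {ffun mid n -> mid n} :=
  [ffun x =>
     if x.1 then
       let v := ve1 x.2 in (* x = W_v *)
       match vtype_at s v with
       | Some T2 | Some T6 => Nm v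
       | Some T4 => Em v
       | _ => x
       end
     else
       let v := ve2 x.2 in (* x = S_v *)
       match vtype_at s v with
       | Some T2 | Some T5 => Em v
       | Some T3 => Nm v
       | _ => x
       end].

(* pushforward SH_# P_n evaluated at a six-vertex configuration s:
   SH^{-1}(s) = { f in GS | sh f = Phi s } since SH = Phi^{-1} o sh *)
Definition SH_push {R : fieldType} (alpha beta gamma : R) (s : {ffun mid n -> bool}) : R :=
  \sum_(f in GS | sh f == Phi s) PGS alpha beta gamma f.

End Defs.

Arguments GS n : clear implicits.
Arguments PS n : clear implicits.
Arguments SV n : clear implicits.

Definition snake_wt {R : nzRingType} (alpha beta gamma : R) (t : vtype) : R :=
  match t with
  | T1 => 1 | T2 => gamma ^+ 2 - alpha * beta | T3 => beta | T4 => alpha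
  | T5 => gamma | T6 => gamma
  end.

Definition delta {R : rcfType} (wt : vtype -> R) : R :=
  (wt T1 * wt T2 + wt T3 * wt T4 - wt T5 * wt T6)
    / (2 * Num.sqrt (wt T1 * wt T2 * wt T3 * wt T4)).

(* Main.v *)
Require Import Defs.
From HB Require Import structures.
From mathcomp Require Import all_boot all_order all_algebra.
From mathcomp Require Import ring lra.
Import Order.TTheory GRing.Theory Num.Theory.
Local Open Scope ring_scope.
Set Implicit Arguments. Unset Strict Implicit. Unset Printing Implicit Defensive.

Definition fwd {n} (x : mid n) : vert n := if x.1 then ve1 x.2 else ve2 x.2.

Lemma ve1_vm1 n (v : vert n) : ve1 (vm1 v) = v.
Proof. by case: v => a b; rewrite /ve1 /vm1 /= subrK. Qed.
Lemma vm1_ve1 n (v : vert n) : vm1 (ve1 v) = v.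
Proof. by case: v => a b; rewrite /ve1 /vm1 /= addrK. Qed.
Lemma ve2_vm2 n (v : vert n) : ve2 (vm2 v) = v.
Proof. by case: v => a b; rewrite /ve2 /vm2 /= subrK. Qed.
Lemma vm2_ve2 n (v : vert n) : vm2 (ve2 v) = v.
Proof. by case: v => a b; rewrite /ve2 /vm2 /= addrK. Qed.

Lemma Zp_add1_neq n (a : 'Z_n) : (a + 1 == a) = false.
Proof.
apply/negbTE/eqP => H; have : (1 : 'Z_n) = 0 by apply: (addrI a); rewrite addr0.
by move/eqP; rewrite oner_eq0.
Qed.
Lemma Zp_sub1_neq n (a : 'Z_n) : (a - 1 == a) = false.
Proof.
apply/negbTE/eqP => H; have : (- 1 : 'Z_n) = 0 by apply: (addrI a); rewrite addr0.
by move/eqP; rewrite oppr_eq0 oner_eq0.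
Qed.

Lemma fwd_Wm n (v : vert n) : fwd (Wm v) = v.
Proof. exact: ve1_vm1. Qed.
Lemma fwd_Sm n (v : vert n) : fwd (Sm v) = v.
Proof. exact: ve2_vm2. Qed.
Lemma Wm_fwd n (x : mid n) : x.1 -> Wm (fwd x) = x.
Proof. by case: x => [[]] w //= _; rewrite /Wm /fwd /= vm1_ve1. Qed.
Lemma Sm_fwd n (x : mid n) : ~~ x.1 -> Sm (fwd x) = x.
Proof. by case: x => [[]] w //= _; rewrite /Sm /fwd /= vm2_ve2. Qed.

Lemma Wm_inj n : injective (@Wm n).
Proof. by move=> u v /(congr1 fwd); rewrite !fwd_Wm. Qed.
Lemma Sm_inj n : injective (@Sm n).
Proof. by move=> u v /(congr1 fwd); rewrite !fwd_Sm. Qed.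

Lemma WE n (v : vert n) : (Wm v == Em v) = false.
Proof. by case: v => a b; rewrite /Wm /Em /vm1 /= !xpair_eqE /= Zp_sub1_neq. Qed.
Lemma SN n (v : vert n) : (Sm v == Nm v) = false.
Proof. by case: v => a b; rewrite /Sm /Nm /vm2 /= !xpair_eqE /= Zp_sub1_neq andbF. Qed.
Lemma EW n (v : vert n) : (Em v == Wm v) = false.
Proof. by rewrite eq_sym WE. Qed.
Lemma NS n (v : vert n) : (Nm v == Sm v) = false.
Proof. by rewrite eq_sym SN. Qed.
Lemma WNx n (v w : vert n) : (Wm v == Nm w) = false.
Proof. by rewrite /Wm /Em /Nm /Sm !xpair_eqE. Qed.
Lemma WSx n (v w : vert n) : (Wm v == Sm w) = false.
Proof. by rewrite /Wm /Em /Nm /Sm !xpair_eqE. Qed.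
Lemma ENx n (v w : vert n) : (Em v == Nm w) = false.
Proof. by rewrite /Wm /Em /Nm /Sm !xpair_eqE. Qed.
Lemma ESx n (v w : vert n) : (Em v == Sm w) = false.
Proof. by rewrite /Wm /Em /Nm /Sm !xpair_eqE. Qed.
Lemma NWx n (v w : vert n) : (Nm v == Wm w) = false.
Proof. by rewrite /Wm /Em /Nm /Sm !xpair_eqE. Qed.
Lemma SWx n (v w : vert n) : (Sm v == Wm w) = false.
Proof. by rewrite /Wm /Em /Nm /Sm !xpair_eqE. Qed.
Lemma NEx n (v w : vert n) : (Nm v == Em w) = false.
Proof. by rewrite /Wm /Em /Nm /Sm !xpair_eqE. Qed.
Lemma SEx n (v w : vert n) : (Sm v == Em w) = false.
Proof. by rewrite /Wm /Em /Nm /Sm !xpair_eqE. Qed.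
Definition neqE := (WE, SN, EW, NS, WNx, WSx, ENx, ESx, NWx, SWx, NEx, SEx, eqxx).


Lemma gs_inj n (f : {ffun mid n -> mid n}) : is_gsnake f -> injective f.
Proof. by case/andP => /injectiveP. Qed.

Lemma gs_disp n (f : {ffun mid n -> mid n}) x : is_gsnake f ->
  [|| f x == x, f x == plus_e3 x | f x == (if x.1 then plus_e1 x else plus_e2 x)].
Proof. by case/andP => _ /forallP. Qed.

Lemma gs_W n (f : {ffun mid n -> mid n}) v : is_gsnake f ->
  [\/ f (Wm v) = Wm v, f (Wm v) = Nm v | f (Wm v) = Em v].
Proof.
move=> /(gs_disp (Wm v)); rewrite /plus_e3 /plus_e1 /= ve1_vm1.
by case/or3P => /eqP; [apply: Or31|apply: Or32|apply: Or33].
Qed.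

Lemma gs_S n (f : {ffun mid n -> mid n}) v : is_gsnake f ->
  [\/ f (Sm v) = Sm v, f (Sm v) = Em v | f (Sm v) = Nm v].
Proof.
move=> /(gs_disp (Sm v)); rewrite /plus_e3 /plus_e2 /= ve2_vm2.
by case/or3P => /eqP; [apply: Or31|apply: Or32|apply: Or33].
Qed.

Lemma gs_preE n (f : {ffun mid n -> mid n}) v y : is_gsnake f -> f y = Em v ->
  [\/ y = Em v, y = Sm v | y = Wm v].
Proof.
move=> /(gs_disp y); case: y => [[] w]; rewrite /plus_e3 /plus_e1 /plus_e2 /=.
- case/or3P => /eqP ->; first by move=> ->; apply: Or31.
    by rewrite /Em; case.
  by rewrite /Em; case=> <-; apply: Or33; rewrite /Wm vm1_ve1.
- case/or3P => /eqP ->; first by move=> ->; apply: Or31.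
    by rewrite /Em; case=> <-; apply: Or32; rewrite /Sm vm2_ve2.
  by rewrite /Em; case.
Qed.

Lemma gs_preN n (f : {ffun mid n -> mid n}) v y : is_gsnake f -> f y = Nm v ->
  [\/ y = Nm v, y = Sm v | y = Wm v].
Proof.
move=> /(gs_disp y); case: y => [[] w]; rewrite /plus_e3 /plus_e1 /plus_e2 /=.
- case/or3P => /eqP ->; first by move=> ->; apply: Or31.
    by rewrite /Nm; case=> <-; apply: Or33; rewrite /Wm vm1_ve1.
  by rewrite /Nm; case.
- case/or3P => /eqP ->; first by move=> ->; apply: Or31.
    by rewrite /Nm; case.
  by rewrite /Nm; case=> <-; apply: Or32; rewrite /Sm vm2_ve2.
Qed.

Lemma gs_E n (f : {ffun mid n -> mid n}) v : is_gsnake f ->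
  (f (Em v) == Em v) = (f (Wm v) != Em v) && (f (Sm v) != Em v).
Proof.
move=> gf; have fi := gs_inj gf.
case: eqP => [fE|fE].
  apply/esym/andP; split; apply/eqP => h.
    by move: (fi _ _ (etrans h (esym fE))) => /eqP; rewrite neqE.
  by move: (fi _ _ (etrans h (esym fE))) => /eqP; rewrite neqE.
have [g fK gK] := injF_bij fi.
have fy : f (g (Em v)) = Em v by apply: gK.
case: (gs_preE gf fy) => h; rewrite h in fy.
- by [].
- by rewrite fy eqxx andbF.
- by rewrite fy eqxx.
Qed.

Lemma gs_N n (f : {ffun mid n -> mid n}) v : is_gsnake f ->
  (f (Nm v) == Nm v) = (f (Wm v) != Nm v) && (f (Sm v) != Nm v).
Proof.
move=> gf; have fi := gs_inj gf.
case: eqP => [fE|fE].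
  apply/esym/andP; split; apply/eqP => h.
    by move: (fi _ _ (etrans h (esym fE))) => /eqP; rewrite neqE.
  by move: (fi _ _ (etrans h (esym fE))) => /eqP; rewrite neqE.
have [g fK gK] := injF_bij fi.
have fy : f (g (Nm v)) = Nm v by apply: gK.
case: (gs_preN gf fy) => h; rewrite h in fy.
- by [].
- by rewrite fy eqxx andbF.
- by rewrite fy eqxx.
Qed.


Lemma SV_some n (s : {ffun mid n -> bool}) v : s \in SV n -> isSome (vtype_at s v).
Proof. by rewrite inE => /forallP /(_ v); case: (vtype_at s v). Qed.

Ltac vcase0 s v eW eE eS eN :=
  rewrite /vtype_at; case eW: (s (Wm v)); case eE: (s (Em v));
  case eS: (s (Sm v)); case eN: (s (Nm v)); rewrite /= ?eW ?eE ?eS ?eN.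
Tactic Notation "vcase" constr(s) constr(v) := vcase0 s v ident:(eW) ident:(eE) ident:(eS) ident:(eN).

Lemma Phi_W n (s : {ffun mid n -> bool}) v :
  Phi s (Wm v) = match vtype_at s v with
                 | Some T2 | Some T6 => Nm v | Some T4 => Em v | _ => Wm v end.
Proof. by rewrite ffunE /= ve1_vm1. Qed.

Lemma Phi_S n (s : {ffun mid n -> bool}) v :
  Phi s (Sm v) = match vtype_at s v with
                 | Some T2 | Some T5 => Em v | Some T3 => Nm v | _ => Sm v end.
Proof. by rewrite ffunE /= ve2_vm2. Qed.

Lemma Phi_W_spec n (s : {ffun mid n -> bool}) v : s \in SV n ->
  (s (Wm v) /\ Phi s (Wm v) = Wm v) \/
  [/\ ~~ s (Wm v), ~~ s (Phi s (Wm v)) & (Phi s (Wm v) = Em v \/ Phi s (Wm v) = Nm v)].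
Proof.
move=> /(SV_some v); rewrite Phi_W; vcase s v => //= _.
all: try by left.
all: by right; split => //; first [by left|by right].
Qed.

Lemma Phi_S_spec n (s : {ffun mid n -> bool}) v : s \in SV n ->
  (s (Sm v) /\ Phi s (Sm v) = Sm v) \/
  [/\ ~~ s (Sm v), ~~ s (Phi s (Sm v)) & (Phi s (Sm v) = Em v \/ Phi s (Sm v) = Nm v)].
Proof.
move=> /(SV_some v); rewrite Phi_S; vcase s v => //= _.
all: try by left.
all: by right; split => //; first [by left|by right].
Qed.

Lemma Phi_spec n (s : {ffun mid n -> bool}) x : s \in SV n ->
  (s x /\ Phi s x = x) \/
  [/\ ~~ s x, ~~ s (Phi s x) & (Phi s x = Em (fwd x) \/ Phi s x = Nm (fwd x))].
Proof.
move=> hs; case hx: x.1.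
  by have := Phi_W_spec (fwd x) hs; rewrite Wm_fwd.
by have := Phi_S_spec (fwd x) hs; rewrite Sm_fwd ?hx.
Qed.

Lemma Phi_local_inj n (s : {ffun mid n -> bool}) v : s \in SV n ->
  ~~ s (Wm v) -> ~~ s (Sm v) -> Phi s (Wm v) != Phi s (Sm v).
Proof. by move=> /(SV_some v); rewrite Phi_W Phi_S; vcase s v; rewrite ?neqE. Qed.

Lemma Phi_inj n (s : {ffun mid n -> bool}) : s \in SV n -> injective (Phi s).
Proof.
move=> hs x y e.
case: (Phi_spec x hs) => [[sx ex]|[sx sPx ox]];
  case: (Phi_spec y hs) => [[sy ey]|[sy sPy oy]].
- by rewrite -ex -ey.
- by rewrite -e ex sx in sPy.
- by rewrite e ey sy in sPx.
have fe : fwd x = fwd y.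
  by move: e; case: ox => ->; case: oy => ->; rewrite /Em /Nm; case.
case hx: x.1; case hy: y.1.
- by rewrite -(Wm_fwd hx) -(Wm_fwd hy) fe.
- move: e sx sy; rewrite -(Wm_fwd hx) -(Sm_fwd (negbT hy)) -fe => e sx sy.
  by move: (Phi_local_inj hs sx sy); rewrite e eqxx.
- move: e sx sy; rewrite -(Sm_fwd (negbT hx)) -(Wm_fwd hy) -fe => e sx sy.
  by move: (Phi_local_inj hs sy sx); rewrite e eqxx.
- by rewrite -(Sm_fwd (negbT hx)) -(Sm_fwd (negbT hy)) fe.
Qed.

Lemma Phi_PS n (s : {ffun mid n -> bool}) : s \in SV n -> Phi s \in PS n.
Proof.
move=> hs; rewrite inE; apply/andP; split; first apply/andP; first split.
- by apply/injectiveP; apply: Phi_inj.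
- apply/forallP => -[[] w]; rewrite ffunE /=.
    by case: (vtype_at s (ve1 w)) => [[]|] /=; rewrite !eqxx ?orbT.
  by case: (vtype_at s (ve2 w)) => [[]|] /=; rewrite !eqxx ?orbT.
- apply/forallP => v; rewrite /crossing Phi_W Phi_S.
  by move: (SV_some v hs); vcase s v; rewrite ?neqE.
Qed.

Lemma Phi_fix n (s : {ffun mid n -> bool}) x : s \in SV n -> (Phi s x == x) = s x.
Proof.
move=> hs; case: (Phi_spec x hs) => [[-> ->]|[/negbTE -> _ [] ->]]; first by rewrite eqxx.
  by case: x => [[] [a b]]; rewrite /Em /fwd /ve1 /ve2 /= !xpair_eqE /= ?Zp_add1_neq.
by case: x => [[] [a b]]; rewrite /Nm /fwd /ve1 /ve2 /= !xpair_eqE /= ?Zp_add1_neq ?andbF.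
Qed.

Lemma Phi_injSV n : {in SV n &, injective (@Phi n)}.
Proof.
move=> s1 s2 h1 h2 e; apply/ffunP => x.
by rewrite -(Phi_fix x h1) -(Phi_fix x h2) e.
Qed.

Lemma PS_gs n (f : {ffun mid n -> mid n}) : f \in PS n -> is_gsnake f.
Proof. by rewrite inE => /andP[]. Qed.
Lemma PS_nc n (f : {ffun mid n -> mid n}) v : f \in PS n -> ~~ crossing f v.
Proof. by rewrite inE => /andP[_ /forallP]. Qed.

Lemma PS_local n (r : {ffun mid n -> mid n}) v : r \in PS n ->
  let s := [ffun x => r x == x] in
  [/\ isSome (vtype_at s v), Phi s (Wm v) = r (Wm v) & Phi s (Sm v) = r (Sm v)].
Proof.
move=> hr s; have g := PS_gs hr; have nc := PS_nc v hr.
have ni : r (Wm v) != r (Sm v).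
  by apply/eqP => /(gs_inj g) /eqP; rewrite neqE.
rewrite Phi_W Phi_S /vtype_at !ffunE (gs_E v g) (gs_N v g).
move: nc ni; rewrite /crossing.
by case: (gs_W v g) => ->; case: (gs_S v g) => ->; rewrite ?neqE.
Qed.

Lemma PS_surj n (r : {ffun mid n -> mid n}) : r \in PS n ->
  exists2 s, s \in SV n & Phi s = r.
Proof.
move=> hr; exists [ffun x => r x == x].
  by rewrite inE; apply/forallP => v; case: (PS_local v hr); case: (vtype_at _ v).
apply/ffunP => x; case hx: x.1.
  by rewrite -(Wm_fwd hx); case: (PS_local (fwd x) hr).
by rewrite -(Sm_fwd (negbT hx)); case: (PS_local (fwd x) hr).
Qed.


Definition swapP n (P : pred (vert n)) (x : mid n) : mid n :=
  if P (fwd x) then (if x.1 then Sm (fwd x) else Wm (fwd x)) else x.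

Lemma swapPK n (P : pred (vert n)) : involutive (swapP P).
Proof.
move=> x; rewrite /swapP; case hP: (P (fwd x)); last by rewrite hP.
case hx: x.1.
  by rewrite fwd_Sm hP /= Wm_fwd.
by rewrite fwd_Wm hP /= Sm_fwd ?hx.
Qed.

Lemma sh_Wm n (f : {ffun mid n -> mid n}) v :
  sh f (Wm v) = if crossing f v then Nm v else f (Wm v).
Proof. by rewrite ffunE /= ve1_vm1. Qed.
Lemma sh_Sm n (f : {ffun mid n -> mid n}) v :
  sh f (Sm v) = if crossing f v then Em v else f (Sm v).
Proof. by rewrite ffunE /= ve2_vm2. Qed.

Lemma sh_swap n (f : {ffun mid n -> mid n}) x : sh f x = f (swapP (crossing f) x).
Proof.
rewrite /swapP; case hx: x.1.
  have -> : sh f x = sh f (Wm (fwd x)) by rewrite Wm_fwd.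
  rewrite sh_Wm; case c: (crossing f (fwd x)); last by rewrite Wm_fwd.
  by case/andP: c => _ /eqP.
have -> : sh f x = sh f (Sm (fwd x)) by rewrite Sm_fwd ?hx.
rewrite sh_Sm; case c: (crossing f (fwd x)); last by rewrite Sm_fwd ?hx.
by case/andP: c => /eqP.
Qed.

Lemma sh_PS n (f : {ffun mid n -> mid n}) : f \in GS n -> sh f \in PS n.
Proof.
rewrite inE => g; rewrite inE; apply/andP; split; first apply/andP; first split.
- apply/injectiveP => x y; rewrite !sh_swap => /(gs_inj g).
  exact: (can_inj (swapPK _)).
- apply/forallP => -[[] w]; rewrite ffunE /=.
    case: (crossing f (ve1 w)); first by rewrite eqxx orbT.
    exact: (gs_disp (true, w) g).
  case: (crossing f (ve2 w)); first by rewrite eqxx orbT.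
  exact: (gs_disp (false, w) g).
- apply/forallP => v; rewrite {1}/crossing sh_Wm sh_Sm.
  case c: (crossing f v); rewrite ?neqE //.
  by rewrite /crossing in c; rewrite c.
Qed.


Lemma prod_if (R : comNzRingType) (I : finType) (P : pred I) (a : R) :
  \prod_i (if P i then a else 1) = a ^+ #|[set i | P i]|.
Proof. by rewrite -big_mkcond /= -prodr_const; apply: eq_bigl => i; rewrite inE. Qed.

Lemma vm1_inj n : injective (@vm1 n). Proof. exact: can_inj (@ve1_vm1 n). Qed.
Lemma vm2_inj n : injective (@vm2 n). Proof. exact: can_inj (@ve2_vm2 n). Qed.

Lemma mid_prod (R : comNzRingType) n (F : mid n -> R) :
  \prod_x F x = \prod_v (F (Wm v) * F (Sm v)).
Proof.
have -> : \prod_x F x = \prod_(p : bool * vert n) F (p.1, p.2).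
  by apply: eq_bigr => -[b w] _.
rewrite -(pair_bigA _ (fun b w => F (b, w))) big_bool /= big_split /=.
congr (_ * _).
  exact: (reindex_inj (@vm1_inj n)).
exact: (reindex_inj (@vm2_inj n)).
Qed.

Definition Gw {R : comNzRingType} (a b c : R) n (f : {ffun mid n -> mid n}) (x : mid n) : R :=
  (if f x == plus_e1 x then a else 1) * (if f x == plus_e2 x then b else 1) *
  (if f x == plus_e3 x then c else 1).
Definition Lf {R : comNzRingType} (a b c : R) n (f : {ffun mid n -> mid n}) (v : vert n) : R :=
  (if crossing f v then -1 else 1) * (Gw a b c f (Wm v) * Gw a b c f (Sm v)).

Lemma wbar_prod (R : comNzRingType) (a b c : R) n (f : {ffun mid n -> mid n}) :
  wbar a b c f = \prod_v Lf a b c f v.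
Proof.
rewrite /wbar /Scount /Acount /Bcount /Ccount -!prod_if.
rewrite -!mulrA -!big_split /= mid_prod -big_split /=.
by apply: eq_bigr => v _; rewrite /Lf /Gw !mulrA.
Qed.

Lemma Zp_add1_neq' n (a : 'Z_n) : (a == a + 1) = false.
Proof. by rewrite eq_sym Zp_add1_neq. Qed.
Lemma Zp_sub1_neq' n (a : 'Z_n) : (a == a - 1) = false.
Proof. by rewrite eq_sym Zp_sub1_neq. Qed.

Ltac crunch v := case: v => p q; rewrite /Wm /Em /Nm /Sm /plus_e1 /plus_e2 /plus_e3
  /ve1 /ve2 /vm1 /vm2 /= !xpair_eqE /= ?subrK ?addrK ?eqxx ?Zp_add1_neq ?Zp_sub1_neq
  ?Zp_add1_neq' ?Zp_sub1_neq' /= ?andbF ?mulr1 ?mul1r.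


Lemma Gw_WW (R : comNzRingType) (a b c : R) n (f : {ffun mid n -> mid n}) v :
  f (Wm v) = Wm v -> Gw a b c f (Wm v) = 1.
Proof. by move=> h; rewrite /Gw h; clear h; crunch v. Qed.
Lemma Gw_WN (R : comNzRingType) (a b c : R) n (f : {ffun mid n -> mid n}) v :
  f (Wm v) = Nm v -> Gw a b c f (Wm v) = c.
Proof. by move=> h; rewrite /Gw h; clear h; crunch v. Qed.
Lemma Gw_WE (R : comNzRingType) (a b c : R) n (f : {ffun mid n -> mid n}) v :
  f (Wm v) = Em v -> Gw a b c f (Wm v) = a.
Proof. by move=> h; rewrite /Gw h; clear h; crunch v. Qed.
Lemma Gw_SS (R : comNzRingType) (a b c : R) n (f : {ffun mid n -> mid n}) v :
  f (Sm v) = Sm v -> Gw a b c f (Sm v) = 1.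
Proof. by move=> h; rewrite /Gw h; clear h; crunch v. Qed.
Lemma Gw_SE (R : comNzRingType) (a b c : R) n (f : {ffun mid n -> mid n}) v :
  f (Sm v) = Em v -> Gw a b c f (Sm v) = c.
Proof. by move=> h; rewrite /Gw h; clear h; crunch v. Qed.
Lemma Gw_SN (R : comNzRingType) (a b c : R) n (f : {ffun mid n -> mid n}) v :
  f (Sm v) = Nm v -> Gw a b c f (Sm v) = b.
Proof. by move=> h; rewrite /Gw h; clear h; crunch v. Qed.


Lemma Lf_gen (R : comNzRingType) (a b c : R) n (f : {ffun mid n -> mid n}) v :
  is_gsnake f ->
  Lf a b c f v = (if (f (Wm v) == Em v) && (f (Sm v) == Nm v) then -1 else 1) *
    ((if f (Wm v) == Em v then a else if f (Wm v) == Nm v then c else 1) *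
     (if f (Sm v) == Nm v then b else if f (Sm v) == Em v then c else 1)).
Proof.
move=> g; rewrite /Lf /crossing.
case: (gs_W v g) => hW; rewrite ?(Gw_WW _ _ _ hW) ?(Gw_WN _ _ _ hW) ?(Gw_WE _ _ _ hW) hW;
case: (gs_S v g) => hS; rewrite ?(Gw_SS _ _ _ hS) ?(Gw_SE _ _ _ hS) ?(Gw_SN _ _ _ hS) hS;
by rewrite ?neqE.
Qed.

Definition locw {R : comNzRingType} (a b c : R) (o : option vtype) : R :=
  match o with Some T2 => c * c | Some t => snake_wt a b c t | None => 1 end.

Lemma Lf_Phi (R : comNzRingType) (a b c : R) n (s : {ffun mid n -> bool}) v :
  s \in SV n -> Lf a b c (Phi s) v = locw a b c (vtype_at s v).
Proof.
move=> hs; rewrite (Lf_gen _ _ _ _ (PS_gs (Phi_PS hs))) Phi_W Phi_S.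
by vcase s v; rewrite ?neqE /= ?mul1r ?mulr1.
Qed.

Definition is_T2 (o : option vtype) : bool := if o is Some T2 then true else false.
Definition Dset n (s : {ffun mid n -> bool}) : {set vert n} := [set v | is_T2 (vtype_at s v)].
Definition Pc n (s : {ffun mid n -> bool}) (c : {ffun vert n -> bool}) : pred (vert n) :=
  fun v => c v && (v \in Dset s).
Definition gc n (s : {ffun mid n -> bool}) (c : {ffun vert n -> bool}) : {ffun mid n -> mid n} :=
  [ffun x => Phi s (swapP (Pc s c) x)].

Lemma swapP_ext n (P Q : pred (vert n)) x : (forall v, P v = Q v) -> swapP P x = swapP Q x.
Proof. by move=> h; rewrite /swapP h. Qed.
Lemma swapP_Wm n (P : pred (vert n)) v : swapP P (Wm v) = if P v then Sm v else Wm v.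
Proof. by rewrite /swapP fwd_Wm. Qed.
Lemma swapP_Sm n (P : pred (vert n)) v : swapP P (Sm v) = if P v then Wm v else Sm v.
Proof. by rewrite /swapP fwd_Sm. Qed.

Lemma Phi_T2 n (s : {ffun mid n -> bool}) v : v \in Dset s ->
  Phi s (Wm v) = Nm v /\ Phi s (Sm v) = Em v.
Proof. by rewrite inE Phi_W Phi_S; case: vtype_at => [[]|]. Qed.

Lemma gc_W n (s : {ffun mid n -> bool}) c v :
  gc s c (Wm v) = if Pc s c v then Em v else Phi s (Wm v).
Proof.
rewrite ffunE swapP_Wm; case h: (Pc s c v) => //.
by case/andP: h => _ /Phi_T2 [].
Qed.
Lemma gc_S n (s : {ffun mid n -> bool}) c v :
  gc s c (Sm v) = if Pc s c v then Nm v else Phi s (Sm v).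
Proof.
rewrite ffunE swapP_Sm; case h: (Pc s c v) => //.
by case/andP: h => _ /Phi_T2 [].
Qed.

Lemma gc_GS n (s : {ffun mid n -> bool}) c : s \in SV n -> gc s c \in GS n.
Proof.
move=> hs; rewrite inE; apply/andP; split.
  apply/injectiveP => x y; rewrite [gc s c x]ffunE [gc s c y]ffunE => e.
  apply: (can_inj (swapPK (Pc s c))); exact: (Phi_inj hs e).
apply/forallP => -[[] w]; rewrite ffunE /swapP /fwd /=.
  case h: (Pc s c (ve1 w)).
    by case/andP: h => _ /Phi_T2 [_ ->]; rewrite eqxx !orbT.
  exact: (gs_disp (true, w) (PS_gs (Phi_PS hs))).
case h: (Pc s c (ve2 w)).
  by case/andP: h => _ /Phi_T2 [-> _]; rewrite eqxx !orbT.
exact: (gs_disp (false, w) (PS_gs (Phi_PS hs))).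
Qed.

Lemma crossing_gc n (s : {ffun mid n -> bool}) c v : s \in SV n ->
  crossing (gc s c) v = Pc s c v.
Proof.
move=> hs; rewrite /crossing gc_W gc_S; case: (Pc s c v); first by rewrite !eqxx.
by apply/negbTE; apply: PS_nc (Phi_PS hs).
Qed.

Lemma sh_gc n (s : {ffun mid n -> bool}) c : s \in SV n -> sh (gc s c) = Phi s.
Proof.
move=> hs; apply/ffunP => x; rewrite sh_swap ffunE.
rewrite (@swapP_ext _ _ (Pc s c)); first by rewrite swapPK.
by move=> v; rewrite crossing_gc.
Qed.

Lemma cross_D n (s : {ffun mid n -> bool}) v :
  Phi s (Wm v) = Nm v -> Phi s (Sm v) = Em v -> v \in Dset s.
Proof. by rewrite inE Phi_W Phi_S; vcase s v; rewrite ?neqE. Qed.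

Lemma gc_sh n (s : {ffun mid n -> bool}) (f : {ffun mid n -> mid n}) :
  s \in SV n -> sh f = Phi s -> f = gc s [ffun v => crossing f v].
Proof.
move=> hs e.
have hP : forall v, Pc s [ffun v => crossing f v] v = crossing f v.
  move=> v; rewrite /Pc ffunE; case c: (crossing f v) => //=.
  apply: cross_D; rewrite -e ?sh_Wm ?sh_Sm c //.
apply/ffunP => x; rewrite ffunE -e sh_swap.
by rewrite (@swapP_ext _ (Pc _ _) (crossing f)) // swapPK.
Qed.


Lemma Lf_gc (R : comNzRingType) (a b c : R) n (s : {ffun mid n -> bool}) cc v :
  s \in SV n ->
  Lf a b c (gc s cc) v = if Pc s cc v then (-1) * (a * b) else Lf a b c (Phi s) v.
Proof.
move=> hs; have g : is_gsnake (gc s cc) by have := gc_GS cc hs; rewrite inE.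
rewrite (Lf_gen _ _ _ _ g) gc_W gc_S; case: (Pc s cc v); first by rewrite !neqE.
by rewrite (Lf_gen _ _ _ _ (PS_gs (Phi_PS hs))).
Qed.

Lemma sum_sh (R : comNzRingType) (a b c : R) n (s : {ffun mid n -> bool}) :
  s \in SV n ->
  \sum_(f in GS n | sh f == Phi s) wbar a b c f = sv_weight (snake_wt a b c) s.
Proof.
move=> hs.
pose Cset := [set cc : {ffun vert n -> bool} | [forall v, cc v ==> (v \in Dset s)]].
have PcC : forall cc v, cc \in Cset -> Pc s cc v = cc v.
  move=> cc v; rewrite inE => /forallP /(_ v); rewrite /Pc.
  by case: (cc v) => //= ->.
have -> : \sum_(f in GS n | sh f == Phi s) wbar a b c f =
          \sum_(f in [set gc s cc | cc in Cset]) wbar a b c f.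
  apply: eq_bigl => f; apply/andP/imsetP.
    case=> gf /eqP e; exists [ffun v => crossing f v]; last exact: gc_sh.
    rewrite inE; apply/forallP => v; rewrite ffunE; apply/implyP => cr.
    by apply: cross_D; rewrite -e ?sh_Wm ?sh_Sm cr.
  by case=> cc _ ->; split; [exact: gc_GS | apply/eqP; exact: sh_gc].
rewrite big_imset; last first.
  move=> c1 c2 h1 h2 e; apply/ffunP => v.
  have : crossing (gc s c1) v = crossing (gc s c2) v by rewrite e.
  by rewrite !crossing_gc // PcC // PcC.
pose F v (bb : bool) : R :=
  if bb then (if v \in Dset s then (-1) * (a * b) else 0) else Lf a b c (Phi s) v.
have -> : \sum_(cc in Cset) wbar a b c (gc s cc) =
          \sum_(cc : {ffun vert n -> bool}) \prod_v F v (cc v).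
  rewrite big_mkcond; apply: eq_bigr => cc _; case: ifP => hc.
    rewrite wbar_prod; apply: eq_bigr => v _; rewrite Lf_gc // PcC // /F.
    case cv: (cc v) => //=.
    by move: hc; rewrite inE => /forallP /(_ v); rewrite cv => /= ->.
  move/negbT: hc; rewrite inE => /forallPn [v]; rewrite negb_imply => /andP [cv nD].
  by rewrite (bigD1 v) //= /F cv (negbTE nD) mul0r.
rewrite -bigA_distr_bigA /sv_weight; apply: eq_bigr => v _.
rewrite big_bool /F Lf_Phi //.
have := SV_some v hs; rewrite inE /is_T2 /locw.
case: (vtype_at s v) => [[]|] //= _; rewrite ?add0r //.
by rewrite mulN1r addrC expr2.
Qed.


Lemma PS_eq n : PS n = [set Phi s | s in SV n].
Proof.
apply/setP => r; apply/idP/imsetP.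
  by case/PS_surj => s hs <-; exists s.
by case=> s hs ->; apply: Phi_PS.
Qed.

Lemma ZGS_eq (R : comNzRingType) (a b c : R) n :
  ZGS n a b c = Zsv n (snake_wt a b c).
Proof.
rewrite /ZGS (partition_big (@sh n) (mem (PS n))); last by move=> f; apply: sh_PS.
rewrite /= PS_eq big_imset /=; last exact: Phi_injSV.
by apply: eq_bigr => s hs; apply: sum_sh.
Qed.

Definition is_T5 (o : option vtype) : bool := if o is Some T5 then true else false.
Definition is_T6 (o : option vtype) : bool := if o is Some T6 then true else false.

Lemma count56 n (s : {ffun mid n -> bool}) : s \in SV n ->
  (\sum_v (is_T5 (vtype_at s v) : nat) = \sum_v (is_T6 (vtype_at s v) : nat))%N.
Proof.
move=> hs.
have e1 : (\sum_v (s (Em v) : nat) = \sum_v (s (Wm v) : nat))%N.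
  exact: (reindex_inj (@vm1_inj n)).
have e2 : (\sum_v ((s (Em v) : nat) + is_T5 (vtype_at s v)) =
           \sum_v ((s (Wm v) : nat) + is_T6 (vtype_at s v)))%N.
  apply: eq_bigr => v _; move: (SV_some v hs); rewrite /is_T5 /is_T6.
  by vcase s v.
by move: e2; rewrite !big_split /= e1 => /addnI.
Qed.


Lemma SH_Psv (R : fieldType) (a b c : R) n (s : {ffun mid n -> bool}) : s \in SV n ->
  SH_push a b c s = Psv (snake_wt a b c) s.
Proof.
by move=> hs; rewrite /SH_push /PGS /Psv -mulr_suml sum_sh // ZGS_eq.
Qed.

Lemma delta_snake (R : rcfType) (a b c : R) : delta (snake_wt a b c) = 0.
Proof.
rewrite /delta /=.
have -> : 1 * (c ^+ 2 - a * b) + b * a - c * c = 0 by rewrite mul1r (mulrC b) expr2 subrK subrr.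
by rewrite mul0r.
Qed.

Lemma weight_scale (R : fieldType) n (w1 w2 : vtype -> R) (K : R) :
  K != 0 -> (forall s, s \in SV n -> sv_weight w1 s = K * sv_weight w2 s) ->
  forall s, s \in SV n -> Psv w1 s = Psv w2 s.
Proof.
move=> hK hw s hs; rewrite /Psv /Zsv hw //.
rewrite (eq_bigr (fun s => K * sv_weight w2 s)); last by move=> t ht; apply: hw.
by rewrite -mulr_sumr invfM mulrACA divff // mul1r.
Qed.

Lemma converse (R : rcfType) n (wt : vtype -> R) :
  (forall t, 0 < wt t) -> delta wt = 0 ->
  exists alpha' beta' gamma' : R,
    [/\ 0 < alpha', 0 < beta', 0 < gamma', 0 < gamma' ^+ 2 - alpha' * beta'
      & forall s, s \in SV n -> Psv wt s = SH_push alpha' beta' gamma' s].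
Proof.
move=> wpos hd.
have a1p := wpos T1; have a2p := wpos T2; have b1p := wpos T3; have b2p := wpos T4.
have c1p := wpos T5; have c2p := wpos T6.
have hc : wt T5 * wt T6 = wt T1 * wt T2 + wt T3 * wt T4.
  move: hd; rewrite /delta => /eqP; rewrite mulf_eq0 invr_eq0 => /orP [].
    by rewrite subr_eq0 => /eqP ->.
  have : 0 < Num.sqrt (wt T1 * wt T2 * wt T3 * wt T4) by rewrite sqrtr_gt0 !mulr_gt0.
  move=> q /eqP h; exfalso; lra.
set a1 := wt T1 in a1p hc *; set a2 := wt T2 in a2p hc *.
set b1 := wt T3 in b1p hc *; set b2 := wt T4 in b2p hc *.
set c1 := wt T5 in c1p hc *; set c2 := wt T6 in c2p hc *.
set g0 := Num.sqrt (c1 * c2).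
have g0p : 0 < g0 by rewrite sqrtr_gt0 mulr_gt0.
have g2 : g0 * g0 = c1 * c2 by rewrite -expr2 sqr_sqrtr // ltW // mulr_gt0.
have a1n : a1 != 0 by rewrite gt_eqF.
have g0n : g0 != 0 by rewrite gt_eqF.
have e : (g0 / a1) ^+ 2 - b2 / a1 * (b1 / a1) = a2 / a1.
  have -> : (g0 / a1) ^+ 2 - b2 / a1 * (b1 / a1) = (g0 * g0 - b1 * b2) / (a1 * a1).
    by field.
  by rewrite g2 hc; field.
exists (b2 / a1), (b1 / a1), (g0 / a1); split.
- by rewrite divr_gt0.
- by rewrite divr_gt0.
- by rewrite divr_gt0.
- by rewrite e divr_gt0.
move=> s hs; rewrite SH_Psv //.
apply: (@weight_scale _ n _ _ (\prod_(v : vert n) a1)) => //.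
  by rewrite prodf_seq_neq0; apply/allP => v _.
move=> t ht; rewrite /sv_weight.
pose p := c1 / g0; pose q := c2 / g0.
have hv : forall o : option vtype,
  (match o with Some t => wt t | None => 0 end) =
  (a1 * (match o with Some t => snake_wt (b2 / a1) (b1 / a1) (g0 / a1) t | None => 0 end)) *
  (p ^+ is_T5 o * q ^+ is_T6 o).
  case=> [[]|] /=; rewrite ?expr0 ?expr1 ?mulr1 ?mul1r ?mulr0 ?mul0r //.
  - by rewrite e -/a2; field.
  - by rewrite -/b1; field.
  - by rewrite -/b2; field.
  - by rewrite /p -/c1; field; rewrite g0n a1n.
  - by rewrite /q -/c2; field; rewrite g0n a1n.
rewrite (eq_bigr _ (fun v _ => hv (vtype_at t v))) !big_split /=.
rewrite !prodrXr count56 // -exprMn.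
have -> : p * q = 1.
  have -> : p * q = (c1 * c2) / (g0 * g0) by rewrite /p /q; field.
  by rewrite g2 divff // mulf_neq0 // gt_eqF.
by rewrite expr1n mulr1.
Qed.

Theorem theorem2p3 (R : rcfType) (n : nat) (alpha beta gamma : R) :
  (1 < n)%N -> 0 < alpha -> 0 < beta -> 0 < gamma ->
  0 < gamma ^+ 2 - alpha * beta ->
  [/\ (* the weights satisfy Delta = 0 *)
      delta (snake_wt alpha beta gamma) = 0,
      (* Phi is a bijection from six-vertex configurations onto pure snakes *)
      [/\ {in SV n &, injective (@Phi n)},
           (forall s, s \in SV n -> Phi s \in PS n)
         & (forall rho, rho \in PS n -> exists2 s, s \in SV n & Phi s = rho)],
      (* sh maps generalised snakes to pure snakes *)
      (forall f, f \in GS n -> sh f \in PS n),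
      (* sum of wbar over sh^{-1}(Phi s) equals w(s) *)
      (forall s, s \in SV n ->
         \sum_(f in GS n | sh f == Phi s) wbar alpha beta gamma f
           = sv_weight (snake_wt alpha beta gamma) s)
    & (* SH_# P_n = Boltzmann measure with these weights *)
      (forall s, s \in SV n ->
         SH_push alpha beta gamma s = Psv (snake_wt alpha beta gamma) s)]
  /\
  (* every positive-weight Boltzmann measure with Delta = 0 arises this way *)
  (forall wt : vtype -> R, (forall t, 0 < wt t) -> delta wt = 0 ->
     exists alpha' beta' gamma' : R,
       [/\ 0 < alpha', 0 < beta', 0 < gamma', 0 < gamma' ^+ 2 - alpha' * beta'
         & forall s, s \in SV n -> Psv wt s = SH_push alpha' beta' gamma' s]).
Proof.
move=> _ _ _ _ _; split.
  split.
  - exact: delta_snake.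
  - split; [exact: Phi_injSV | move=> s; exact: Phi_PS | move=> r; exact: PS_surj].
  - by move=> f; exact: sh_PS.
  - by move=> s; exact: sum_sh.
  - by move=> s; exact: SH_Psv.
by move=> wt; exact: converse.
Qed.
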